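(* Let $v_{1,1},v_{2,1},w_{1,1},w_{2,1}\in\mathbb R$ satisfy $w_{i,1}>0$, $4v_{i,1}+w_{i,1}>0$ ($i=1,2$), $v_{1,1}v_{2,1}>0$ and $c_2>c_1$, where $c_i:=2v_{i,1}+w_{i,1}$. Then for every $\vartheta\in(-\pi,\pi]$ one has $2\omega_+(\vartheta)\neq\omega_-(2\vartheta)$ and $2\omega_+(\vartheta)\neq\omega_+(2\vartheta)$.
   Context: For $\vartheta\in\mathbb R$ define $$\omega_\pm(\vartheta):=\sqrt{\tfrac12\Big(c_1+c_2\pm\sqrt{(c_1-c_2)^2+8v_{1,1}v_{2,1}(\cos\vartheta+1)}\Big)},$$ which are well defined and positive under the stated assumptions (these are the optical ($+$) and acoustical ($-$) branches of the dispersion relation $\det H(\omega,\vartheta)=0$, $H(\omega,\vartheta)=\begin{pmatrix}\omega^2-c_1 & v_{1,1}(e^{i\vartheta}+1)\\ v_{2,1}(1+e^{-i\vartheta}) & \omega^2-c_2\end{pmatrix}$, of the linearized diatomic chain). *)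

(* Defs.v *)
From Stdlib Require Import Reals Lra.
Open Scope R_scope.

Definition cc (v w : R) : R := 2 * v + w.

Definition omega_p (v11 v21 w11 w21 th : R) : R :=
  let c1 := cc v11 w11 in let c2 := cc v21 w21 in
  sqrt ((1/2) * (c1 + c2 + sqrt ((c1 - c2)^2 + 8 * v11 * v21 * (cos th + 1)))).

Definition omega_m (v11 v21 w11 w21 th : R) : R :=
  let c1 := cc v11 w11 in let c2 := cc v21 w21 in
  sqrt ((1/2) * (c1 + c2 - sqrt ((c1 - c2)^2 + 8 * v11 * v21 * (cos th + 1)))).

(* Main.v *)
Require Import Defs.
From Stdlib Require Import Reals Lra Psatz.
Open Scope R_scope.

Lemma key_ne (x y : R) : 0 < x -> y < 4 * x -> 2 * sqrt x <> sqrt y.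
Proof.
  intros hx hy E.
  assert (h2 : 2 * sqrt x = sqrt (4 * x)).
  { rewrite sqrt_mult by lra. replace 4 with (2*2) by lra.
    rewrite sqrt_square by lra. reflexivity. }
  assert (hs : 0 < sqrt x) by (apply sqrt_lt_R0; lra).
  destruct (Rle_or_lt y 0) as [hy0|hy0].
  - rewrite (sqrt_neg_0 y hy0) in E. lra.
  - assert (sqrt y < sqrt (4*x)) by (apply sqrt_lt_1; lra). lra.
Qed.

Theorem mainTheorem1 (v11 v21 w11 w21 : R)
  (hw1 : 0 < w11) (hw2 : 0 < w21)
  (h41 : 0 < 4 * v11 + w11) (h42 : 0 < 4 * v21 + w21)
  (hv : 0 < v11 * v21)
  (hc : cc v11 w11 < cc v21 w21) :
  forall th : R, - PI < th <= PI ->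
    2 * omega_p v11 v21 w11 w21 th <> omega_m v11 v21 w11 w21 (2 * th) /\
    2 * omega_p v11 v21 w11 w21 th <> omega_p v11 v21 w11 w21 (2 * th).
Proof.
  intros th _.
  unfold omega_p, omega_m, cc in *.
  set (c1 := 2 * v11 + w11) in *.
  set (c2 := 2 * v21 + w21) in *.
  assert (hc1 : 0 < c1) by (unfold c1; nra).
  assert (hc2 : 0 < c2) by (unfold c2; nra).
  assert (hb : 16 * (v11 * v21) < 4 * c2 ^ 2).
  { unfold c1, c2 in *. destruct (Rlt_or_le 0 v11) as [p|p].
    - assert (0 < v21) by nra. nra.
    - assert (v11 < 0) by nra. assert (v21 < 0) by nra. nra. }
  pose proof (COS_bound th) as [cb1 cb2].
  pose proof (COS_bound (2*th)) as [cd1 cd2].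
  set (S1 := sqrt ((c1 - c2) ^ 2 + 8 * v11 * v21 * (cos th + 1))).
  set (S2 := sqrt ((c1 - c2) ^ 2 + 8 * v11 * v21 * (cos (2*th) + 1))).
  assert (hS1 : c2 - c1 <= S1).
  { unfold S1. rewrite <- (sqrt_pow2 (c2 - c1)) by lra.
    apply sqrt_le_1_alt. nra. }
  assert (hS2 : S2 < 7 * c2 - c1).
  { unfold S2. rewrite <- (sqrt_pow2 (7*c2 - c1)) by lra.
    apply sqrt_lt_1_alt. split. nra. nra. }
  assert (hS2p : 0 <= S2) by apply sqrt_pos.
  split; apply key_ne; lra.
Qed.
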